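(* For every positive integer $n$, $\mathsf{pf}_n(132)=\mathsf{pf}_n(231)$ and $\mathsf{pf}_n(213)=\mathsf{pf}_n(312)$.
   Context: $[n]=\{1,\dots,n\}$. A tuple $p=(p_1,\dots,p_n)\in[n]^n$ is a parking function if its weakly increasing rearrangement $(p'_1,\dots,p'_n)$ satisfies $p'_i\le i$ for all $i$. To a parking function $p$ associate the permutation $\pi(p)$ obtained by listing, for $s=1,\dots,n$ in turn, the indices $j$ with $p_j=s$ in increasing order, and concatenating. A permutation $\pi$ avoids $\sigma\in\mathfrak S_3$ if no length-3 subsequence of $\pi$ is order-isomorphic to $\sigma$. $\mathsf{pf}_n(\sigma)$ is the number of parking functions $p$ of length $n$ with $\pi(p)$ avoiding $\sigma$. *)

(* Defs.v *)
From mathcomp Require Import all_boot.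
Set Implicit Arguments. Unset Strict Implicit. Unset Printing Implicit Defensive.

(* A tuple p in [n]^n is a finite function 'I_n -> 'I_n.+1 whose values are
   all nonzero (so p_j ranges over {1,...,n}); the position j : 'I_n stands
   for index j+1. *)
Definition in_range (n : nat) (p : {ffun 'I_n -> 'I_n.+1}) : bool :=
  [forall j, 0 < (p j : nat)].

Definition rearr (n : nat) (p : {ffun 'I_n -> 'I_n.+1}) : seq nat :=
  sort leq [seq (p j : nat) | j <- enum 'I_n].

(* p'_i <= i for all i = 1..n  (0-indexed: nth i <= i+1) *)
Definition parking (n : nat) (p : {ffun 'I_n -> 'I_n.+1}) : bool :=
  in_range p && [forall i : 'I_n, nth 0 (rearr p) i <= i.+1].

Definition pi_of (n : nat) (p : {ffun 'I_n -> 'I_n.+1}) : seq nat :=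
  flatten [seq [seq (val j).+1 | j <- enum 'I_n & (p j : nat) == s]
          | s <- iota 1 n].

Definition contains3 (s sigma : seq nat) : bool :=
  [exists i : 'I_(size s), exists j : 'I_(size s), exists k : 'I_(size s),
     (i < j) && (j < k) &&
     [forall a : 'I_3, forall b : 'I_3,
        (nth 0 s (nth 0 [:: val i; val j; val k] a)
           < nth 0 s (nth 0 [:: val i; val j; val k] b))
        == (nth 0 sigma a < nth 0 sigma b)]].

Definition avoids3 (s sigma : seq nat) : bool := ~~ contains3 s sigma.

Definition pf (n : nat) (sigma : seq nat) : nat :=
  #|[set p : {ffun 'I_n -> 'I_n.+1} | parking p && avoids3 (pi_of p) sigma]|.

(* Main.v *)
Require Import Defs.
From mathcomp Require Import all_boot.
From mathcomp Require Import zify.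
Set Implicit Arguments. Unset Strict Implicit. Unset Printing Implicit Defensive.

Fixpoint hasPair (R : nat -> nat -> bool) (s : seq nat) : bool :=
  if s is y :: s' then has (R y) s' || hasPair R s' else false.
Fixpoint av (T : nat -> nat -> nat -> bool) (s : seq nat) : bool :=
  if s is x :: s' then ~~ hasPair (T x) s' && av T s' else true.

Lemma hasPair_cat R s1 s2 : hasPair R (s1 ++ s2) =
  [|| hasPair R s1, hasPair R s2 | has (fun y => has (R y) s2) s1].
Proof.
elim: s1 => [|y s1 IH] /=; first by rewrite orbF.
rewrite IH has_cat.
by case: (has (R y) s1); case: (has (R y) s2); case: (hasPair R s1);
   case: (hasPair R s2); case: (has _ s1).
Qed.

Lemma hasPair_nilL R s : (forall y z, y \in s -> R y z = false) -> hasPair R s = false.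
Proof.
elim: s => [|y s IH] H //=; rewrite IH ?orbF; last by move=> a b ab; apply: H; rewrite inE ab orbT.
by apply/hasP => -[z _]; rewrite H ?inE ?eqxx.
Qed.

Lemma hasPair_nilR R s : (forall y z, z \in s -> R y z = false) -> hasPair R s = false.
Proof.
elim: s => [|y s IH] H //=; rewrite IH ?orbF; last by move=> a b ab; apply: H; rewrite inE ab orbT.
by apply/hasP => -[z zs]; rewrite H ?inE ?zs ?orbT.
Qed.

Fixpoint F (L : nat -> nat -> bool) (k : nat) (s : seq nat) : seq nat :=
  match k with
  | 0 => s
  | k'.+1 => match s with
             | [::] => [::]
             | v :: r => v :: F L k' (filter (L v) r) ++ F L k' (filter (fun y => ~~ L v y) r)
             end
  end.

Section Gen.
Variable L : nat -> nat -> bool.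
Hypothesis H1 : forall v x z, L v z -> ~~ L v x -> L x z.
Hypothesis H2 : forall v x z, L v x -> ~~ L v z -> ~~ L x z.

Definition T1 x y z := L x y && ~~ L x z.
Definition T2 x y z := ~~ L x y && L x z.

Lemma avcat1 v g l : all (fun y => ~~ L v y) g -> all (L v) l ->
  av T1 (g ++ l) = av T1 g && av T1 l.
Proof.
elim: g => [|x g IH] //= /andP[Hx Hg] Hl.
rewrite IH // hasPair_cat (@hasPair_nilR _ l) ?orbF; last first.
  by move=> y z zl; rewrite /T1 (H1 (allP Hl z zl) Hx) andbF.
have -> : has (fun y => has (T1 x y) l) g = false.
  apply/hasP => -[y _ /hasP[z zl]]; by rewrite /T1 (H1 (allP Hl z zl) Hx) andbF.
by rewrite !orbF andbA.
Qed.

Lemma avcat2 v l g : all (L v) l -> all (fun y => ~~ L v y) g ->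
  av T2 (l ++ g) = av T2 l && av T2 g.
Proof.
elim: l => [|x l IH] //= /andP[Hx Hl] Hg.
rewrite IH // hasPair_cat (@hasPair_nilR _ g) ?orbF; last first.
  by move=> y z zg; rewrite /T2 (negbTE (H2 Hx (allP Hg z zg))) andbF.
have -> : has (fun y => has (T2 x y) g) l = false.
  apply/hasP => -[y _ /hasP[z zg]]; by rewrite /T2 (negbTE (H2 Hx (allP Hg z zg))) andbF.
by rewrite !orbF andbA.
Qed.

Lemma filter_none (a : pred nat) s : all (fun y => ~~ a y) s -> filter a s = [::].
Proof. by elim: s => //= z s IH /andP[/negbTE -> /IH]. Qed.

Lemma nopair v r : ~~ hasPair (T1 v) r ->
  r = filter (fun y => ~~ L v y) r ++ filter (L v) r.
Proof.
elim: r => [|y r IH] //=; rewrite negb_or => /andP[Hh Hp].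
case Ly: (L v y) => /=.
  have E : all (L v) r.
    apply/allP => z zr; apply: contraNT Hh => Lz; apply/hasP; exists z => //.
    by rewrite /T1 Ly Lz.
  rewrite (all_filterP E).
  rewrite filter_none //; apply/allP => z zr; rewrite negbK; exact: (allP E).
by rewrite {1}(IH Hp).
Qed.


Lemma F_perm k s : perm_eq (F L k s) s.
Proof.
elim: k s => [|k IH] [|v r] //=.
rewrite perm_cons; apply: perm_trans (perm_cat (IH _) (IH _)) _.
by rewrite perm_filterC.
Qed.

Lemma allF k s (a : pred nat) : all a s -> all a (F L k s).
Proof. by rewrite (perm_all _ (F_perm k s)). Qed.

Lemma all_filter_self (a : pred nat) s : all a (filter a s).
Proof. by apply/allP => x; rewrite mem_filter => /andP[]. Qed.

Lemma F_av k s : size s <= k -> av T1 s -> av T2 (F L k s).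
Proof.
elim: k s => [|k IH] [|v r] //= Hs /andP[Hp Ha].
have E := nopair Hp.
have Hl := all_filter_self (L v) r.
have Hg := all_filter_self (fun y => ~~ L v y) r.
move: Ha; rewrite {1}E (avcat1 (v:=v)) // => /andP[Ag Al].
rewrite (avcat2 (v:=v)) ?allF //.
rewrite IH ?IH //; try by rewrite size_filter (leq_trans (count_size _ _)).
rewrite !andbT hasPair_cat (@hasPair_nilL _ (F L k (filter (L v) r))); last first.
  by move=> y z /(allP (allF k Hl)) Ly; rewrite /T2 Ly.
rewrite (@hasPair_nilR _ (F L k _)); last first.
  by move=> y z /(allP (allF k Hg)) /negbTE Lz; rewrite /T2 Lz andbF.
by apply/hasP => -[y /(allP (allF k Hl)) Ly /hasP[z _]]; rewrite /T2 Ly.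
Qed.

Lemma F_inv k s : size s <= k -> av T1 s ->
  F (fun x y => ~~ L x y) k (F L k s) = s.
Proof.
elim: k s => [|k IH] [|v r] //= Hs /andP[Hp Ha].
have E := nopair Hp.
have Hl := all_filter_self (L v) r.
have Hg := all_filter_self (fun y => ~~ L v y) r.
move: Ha; rewrite {1}E (avcat1 (v:=v)) // => /andP[Ag Al].
rewrite !filter_cat.
set l := filter (L v) r in Hl Al *; set g := filter (fun y => ~~ L v y) r in Hg Ag *.
have Fl := allF k Hl; have Fg := allF k Hg.
have -> : filter (fun y => ~~ L v y) (F L k l) = [::].
  by apply: filter_none; apply/allP => y yin; rewrite negbK (allP Fl y yin).
have -> : filter (fun y => ~~ L v y) (F L k g) = F L k g by apply/all_filterP.
have -> : filter (fun y => ~~ ~~ L v y) (F L k g) = [::].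
  by apply: filter_none; apply/allP => y yin; rewrite negbK (allP Fg y yin).
have -> : filter (fun y => ~~ ~~ L v y) (F L k l) = F L k l.
  by apply/all_filterP/allP => y yin; rewrite negbK (allP Fl y yin).
rewrite /= cats0 !IH //; try by rewrite size_filter (leq_trans (count_size _ _)).
by rewrite -E.
Qed.
End Gen.
Definition badI (T : nat -> nat -> nat -> bool) (s : seq nat) := exists a b c,
  [/\ a < b, b < c, c < size s & T (nth 0 s a) (nth 0 s b) (nth 0 s c)].

Lemma hasPairP R s : hasPair R s <->
  exists b c, [/\ b < c, c < size s & R (nth 0 s b) (nth 0 s c)].
Proof.
elim: s => [|y s IH] /=; first by split=> // -[b [c [? ? ?]]].
split.
  case/orP.
    case/(has_nthP 0) => c cs Hc; exists 0, c.+1; split => //.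
  case/IH => b [c [bc cs Hr]]; exists b.+1, c.+1; split => //.
move=> [[|b] [[|c] [//= bc cs Hr]]].
  by apply/orP; left; apply/(has_nthP 0); exists c.
by apply/orP; right; apply/IH; exists b, c.
Qed.

Lemma avP T s : ~~ av T s <-> badI T s.
Proof.
elim: s => [|x s IH] /=; first by split=> // -[a [b [c [? ? ? ?]]]].
rewrite negb_and negbK; split.
  case/orP.
    by case/hasPairP => b [c [bc cs Hr]]; exists 0, b.+1, c.+1.
  by case/IH => a [b [c [ab bc cs Hr]]]; exists a.+1, b.+1, c.+1.
move=> [[|a] [[|b] [[|c] [//= ab bc cs Hr]]]].
  by apply/orP; left; apply/hasPairP; exists b, c.
by apply/orP; right; apply/IH; exists a, b, c.
Qed.

Lemma badI_rev T s : badI T (rev s) <-> badI (fun x y z => T z y x) s.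
Proof.
rewrite /badI size_rev; split => -[a [b [c [ab bc cs Hr]]]].
  exists (size s - c.+1), (size s - b.+1), (size s - a.+1).
  rewrite !nth_rev in Hr; try lia.
  split; try lia.
exists (size s - c.+1), (size s - b.+1), (size s - a.+1).
rewrite !nth_rev; try lia.
split; try lia.
have E : forall x, x < size s -> size s - (size s - x.+1).+1 = x by move=> x ?; lia.
by rewrite !E //; lia.
Qed.

Lemma av_ext T T' s : (forall x y z, T x y z = T' x y z) -> av T s = av T' s.
Proof.
move=> E; elim: s => [|x s IH] //=; rewrite IH; congr (~~ _ && _).
elim: s {IH} => [|y s IH] //=; rewrite IH; congr (_ || _).
by apply: eq_has => z; apply: E.
Qed.

Definition Q (sg : seq nat) (x y z : nat) : bool :=
  [forall a : 'I_3, forall b : 'I_3,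
     (nth 0 [:: x; y; z] a < nth 0 [:: x; y; z] b) == (nth 0 sg a < nth 0 sg b)].

Lemma contains3P s sg : contains3 s sg <-> exists i j k,
  [/\ i < j, j < k, k < size s & Q sg (nth 0 s i) (nth 0 s j) (nth 0 s k)].
Proof.
have E : forall (i j k : nat) (a : 'I_3), nth 0 s (nth 0 [:: i; j; k] a) =
    nth 0 [:: nth 0 s i; nth 0 s j; nth 0 s k] a.
  by move=> i j k [[|[|[|a]]] Ha].
have EQ : forall i j k : nat, [forall a : 'I_3, forall b : 'I_3,
        (nth 0 s (nth 0 [:: i; j; k] a) < nth 0 s (nth 0 [:: i; j; k] b))
           == (nth 0 sg a < nth 0 sg b)] = Q sg (nth 0 s i) (nth 0 s j) (nth 0 s k).
  by move=> i j k; apply: eq_forallb => a; apply: eq_forallb => b; rewrite !E.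
split.
  case/existsP => i /existsP[j /existsP[k /andP[/andP[ij jk] H]]].
  by exists i, j, k; split => //; rewrite -EQ.
move=> [i [j [k [ij jk ks H]]]].
have Hi : i < size s by lia.
have Hj : j < size s by lia.
apply/existsP; exists (Ordinal Hi); apply/existsP; exists (Ordinal Hj).
apply/existsP; exists (Ordinal ks); rewrite /= ij jk /=.
by rewrite EQ.
Qed.

Lemma forall3 (P : 'I_3 -> bool) :
  [forall a, P a] = [&& P (@Ordinal 3 0 isT), P (@Ordinal 3 1 isT) & P (@Ordinal 3 2 isT)].
Proof.
apply/forallP/idP.
  by move=> H; rewrite !H.
move=> /and3P[H0 H1 H2] [[|[|[|a]]] Ha].
- by rewrite (_ : Ordinal Ha = Ordinal (isT : 0 < 3)) //; apply: val_inj.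
- by rewrite (_ : Ordinal Ha = Ordinal (isT : 1 < 3)) //; apply: val_inj.
- by rewrite (_ : Ordinal Ha = Ordinal (isT : 2 < 3)) //; apply: val_inj.
- by [].
Qed.

Lemma Q132 x y z : Q [:: 1; 3; 2] x y z = (x < z) && (z < y).
Proof. rewrite /Q !forall3 /=; apply/idP/idP; lia. Qed.
Lemma Q231 x y z : Q [:: 2; 3; 1] x y z = (z < x) && (x < y).
Proof. rewrite /Q !forall3 /=; apply/idP/idP; lia. Qed.
Lemma Q213 x y z : Q [:: 2; 1; 3] x y z = (y < x) && (x < z).
Proof. rewrite /Q !forall3 /=; apply/idP/idP; lia. Qed.
Lemma Q312 x y z : Q [:: 3; 1; 2] x y z = (y < z) && (z < x).
Proof. rewrite /Q !forall3 /=; apply/idP/idP; lia. Qed.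

Lemma pos_elems (r : rel nat) s (C : nat -> nat -> nat -> bool) :
  pairwise r s -> (forall x, ~~ r x x) -> (forall x y, r x y -> ~~ r y x) ->
  (exists i j k, [/\ i < j, j < k, k < size s & C (nth 0 s i) (nth 0 s j) (nth 0 s k)])
  <-> (exists x y z, [/\ [&& x \in s, y \in s & z \in s], r x y, r y z & C x y z]).
Proof.
move=> /(pairwiseP 0) Hp Hirr Hasym; split.
  move=> [i [j [k [ij jk ks H]]]].
  have Hi : i < size s by lia.
  have Hj : j < size s by lia.
  exists (nth 0 s i), (nth 0 s j), (nth 0 s k); split; rewrite ?mem_nth //;
  by apply: Hp.
move=> [x [y [z [/and3P[xs ys zs] rxy ryz H]]]].
have ord : forall u v, u \in s -> v \in s -> r u v -> index u s < index v s.
  move=> u v us vs ruv; case: (ltngtP (index u s) (index v s)) => // H'.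
    have := Hp (index v s) (index u s); rewrite !inE !index_mem !nth_index //.
    by move=> /(_ vs us H') rvu; move: (Hasym _ _ ruv); rewrite rvu.
  have : nth 0 s (index u s) = nth 0 s (index v s) by rewrite H'.
  by rewrite !nth_index // => E; move: (Hirr u); rewrite {2}E ruv.
exists (index x s), (index y s), (index z s); split.
- exact: ord.
- exact: ord.
- by rewrite index_mem.
- by rewrite !nth_index.
Qed.

Section PF.
Variable n : nat.
Implicit Types p : {ffun 'I_n -> 'I_n.+1}.

Definition w p : seq nat := [seq (p j : nat) | j <- enum 'I_n].
Definition V p x := nth 0 (w p) x.-1.
Definition keylt p : rel nat := fun x y => (V p x < V p y) || (V p x == V p y) && (x < y).

Lemma size_w p : size (w p) = n.
Proof. by rewrite size_map size_enum_ord. Qed.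

Lemma nth_w p (j : 'I_n) : nth 0 (w p) j = p j.
Proof. by rewrite (nth_map j) ?size_enum_ord // nth_ord_enum. Qed.

Lemma pi_mem p x : in_range p -> (x \in Defs.pi_of p) = (0 < x <= n).
Proof.
move=> /forallP Hr; apply/flattenP/idP.
  move=> [b /mapP[s _ ->] /mapP[j _ ->]]; by rewrite /= ltn_ord.
move=> Hx.
have Hj : x.-1 < n by lia.
set j := Ordinal Hj.
have Hpj := Hr j; have Hpn := ltn_ord (p j).
exists [seq (val j0).+1 | j0 <- enum 'I_n & (p j0 : nat) == p j].
  apply/mapP; exists (p j : nat) => //; rewrite mem_iota; lia.
apply/mapP; exists j; first by rewrite mem_filter eqxx mem_enum.
by rewrite /=; lia.
Qed.

Lemma keyV p (j : 'I_n) : V p j.+1 = p j.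
Proof. by rewrite /V /= nth_w. Qed.

Lemma pairwise_filter_in (T : eqType) (a : pred T) (r : rel T) s :
  pairwise (fun x y => a x ==> a y ==> r x y) s -> pairwise r (filter a s).
Proof.
elim: s => //= x s IH /andP[Hx Hs]; case: ifP => ax /=; rewrite IH // ?andbT.
apply/allP => y; rewrite mem_filter => /andP[ay ys].
by have := allP Hx y ys; rewrite /= ax ay.
Qed.

Lemma pi_pairwise p : pairwise (keylt p) (Defs.pi_of p).
Proof.
rewrite /Defs.pi_of.
have : pairwise ltn (iota 1 n) by rewrite -sorted_pairwise ?iota_ltn_sorted //; exact: ltn_trans.
elim: (iota 1 n) => [|a l IH] //=.
move=> /andP[Ha Hl]; rewrite pairwise_cat IH // andbT.
apply/andP; split.
  apply/allrelP => x y /mapP[j]; rewrite mem_filter => /andP[/eqP pj _] ->.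
  move=> /flattenP[b /mapP[c cl ->] /mapP[j' ]]; rewrite mem_filter => /andP[/eqP pj' _] ->.
  rewrite /keylt !keyV pj pj'; have := allP Ha c cl; by move=> H; apply/orP; left.
rewrite (pairwise_map (fun j : 'I_n => (val j).+1)); apply: pairwise_filter_in.
have : pairwise ltn (map val (enum 'I_n)).
  by rewrite val_enum_ord -sorted_pairwise ?iota_ltn_sorted //; exact: ltn_trans.
rewrite pairwise_map; apply: sub_pairwise => i j /= ij.
apply/implyP => /eqP pi; apply/implyP => /eqP pj.
rewrite /keylt !keyV pi pj eqxx ltnn /=; exact: ij.
Qed.

Lemma contains_key p sg : in_range p -> contains3 (Defs.pi_of p) sg <->
  exists x y z, [/\ [&& 0 < x <= n, 0 < y <= n & 0 < z <= n],
     keylt p x y, keylt p y z & Q sg x y z].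
Proof.
move=> Hr; apply: iff_trans (contains3P _ _) _.
apply: iff_trans (pos_elems _ (pi_pairwise p) _ _) _.
- by move=> x; rewrite /keylt; lia.
- by move=> x y; rewrite /keylt; lia.
by split => -[x [y [z [H1 H2 H3 H4]]]]; exists x, y, z; split => //; move: H1; rewrite !pi_mem.
Qed.

Lemma c132 p : in_range p -> contains3 (Defs.pi_of p) [:: 1; 3; 2] <->
  badI (fun x y z => (x <= z) && (z < y)) (w p).
Proof.
move=> Hr; apply: iff_trans (contains_key _ Hr) _; rewrite /badI size_w.
split.
  move=> [x [y [z [H1 H2 H3]]]]; rewrite Q132 => H4.
  exists x.-1, z.-1, y.-1; move: H2 H3; rewrite /keylt /V; split; lia.
move=> [a [b [c [ab bc cn H]]]]; exists a.+1, c.+1, b.+1; rewrite Q132 /keylt /V /=.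
split; lia.
Qed.

Lemma c231 p : in_range p -> contains3 (Defs.pi_of p) [:: 2; 3; 1] <->
  badI (fun x y z => (y <= z) && (z < x)) (w p).
Proof.
move=> Hr; apply: iff_trans (contains_key _ Hr) _; rewrite /badI size_w.
split.
  move=> [x [y [z [H1 H2 H3]]]]; rewrite Q231 => H4.
  exists z.-1, x.-1, y.-1; move: H2 H3; rewrite /keylt /V; split; lia.
move=> [a [b [c [ab bc cn H]]]]; exists b.+1, c.+1, a.+1; rewrite Q231 /keylt /V /=.
split; lia.
Qed.

Lemma c213 p : in_range p -> contains3 (Defs.pi_of p) [:: 2; 1; 3] <->
  badI (fun x y z => (y < x) && (x <= z)) (w p).
Proof.
move=> Hr; apply: iff_trans (contains_key _ Hr) _; rewrite /badI size_w.
split.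
  move=> [x [y [z [H1 H2 H3]]]]; rewrite Q213 => H4.
  exists y.-1, x.-1, z.-1; move: H2 H3; rewrite /keylt /V; split; lia.
move=> [a [b [c [ab bc cn H]]]]; exists b.+1, a.+1, c.+1; rewrite Q213 /keylt /V /=.
split; lia.
Qed.

Lemma c312 p : in_range p -> contains3 (Defs.pi_of p) [:: 3; 1; 2] <->
  badI (fun x y z => (z < x) && (x <= y)) (w p).
Proof.
move=> Hr; apply: iff_trans (contains_key _ Hr) _; rewrite /badI size_w.
split.
  move=> [x [y [z [H1 H2 H3]]]]; rewrite Q312 => H4.
  exists y.-1, z.-1, x.-1; move: H2 H3; rewrite /keylt /V; split; lia.
move=> [a [b [c [ab bc cn H]]]]; exists c.+1, a.+1, b.+1; rewrite Q312 /keylt /V /=.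
split; lia.
Qed.
End PF.

Section Count.
Variable n : nat.
Implicit Types p : {ffun 'I_n -> 'I_n.+1}.

Definition ffun_of (s : seq nat) : {ffun 'I_n -> 'I_n.+1} := [ffun j : 'I_n => (inord (nth 0 s j) : 'I_n.+1)].

Lemma ffun_of_w p : ffun_of (w p) = p.
Proof.
apply/ffunP => j; rewrite ffunE nth_w; apply: val_inj; rewrite /= inordK //.
Qed.

Lemma w_ffun_of s : size s = n -> all (fun x => x <= n) s -> w (ffun_of s) = s.
Proof.
move=> Hs Ha; apply: (@eq_from_nth _ 0); first by rewrite size_w.
move=> i; rewrite size_w => Hi.
rewrite /w (nth_map (Ordinal Hi)) ?size_enum_ord // ffunE nth_enum_ord // inordK //.
by rewrite ltnS; apply: (allP Ha); rewrite mem_nth // Hs.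
Qed.

Lemma all_w p : all (fun x => x <= n) (w p).
Proof. by apply/allP => x /mapP[j _ ->]; rewrite -ltnS ltn_ord. Qed.

Definition parkW (s : seq nat) : bool :=
  all (fun x => 0 < x) s && [forall i : 'I_n, nth 0 (sort leq s) i <= i.+1].

Lemma parkingE p : parking p = parkW (w p).
Proof.
rewrite /parking /parkW /rearr; congr (_ && _).
apply/forallP/allP => [H x /mapP[j _ ->] | H j]; first exact: H.
by apply: H; apply/mapP; exists j; rewrite ?mem_enum.
Qed.

Lemma parkW_perm s s' : perm_eq s s' -> parkW s = parkW s'.
Proof.
move=> E; rewrite /parkW (perm_all _ E).
have -> // : sort leq s = sort leq s'.
apply/perm_sortP => //; [exact: leq_total | exact: leq_trans | exact: anti_leq].
Qed.

Definition S (T : nat -> nat -> nat -> bool) (tr : seq nat -> seq nat) :=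
  [set p : {ffun 'I_n -> 'I_n.+1} | parkW (w p) && av T (tr (w p))].

Lemma count_le (L : nat -> nat -> bool)
  (H1 : forall v x z, L v z -> ~~ L v x -> L x z)
  (H2 : forall v x z, L v x -> ~~ L v z -> ~~ L x z)
  (tr : seq nat -> seq nat) (trK : involutive tr) (trP : forall s, perm_eq (tr s) s) :
  #|S (T1 L) tr| <= #|S (T2 L) tr|.
Proof.
pose f p := ffun_of (tr (F L n (tr (w p)))).
pose g p := ffun_of (tr (F (fun x y => ~~ L x y) n (tr (w p)))).
have Pf : forall p, perm_eq (tr (F L n (tr (w p)))) (w p).
  move=> p; apply: perm_trans (trP _) _; apply: perm_trans (F_perm _ _ _) _; exact: trP.
have wf : forall p, w (f p) = tr (F L n (tr (w p))).
  move=> p; apply: w_ffun_of; first by rewrite (perm_size (Pf p)) size_w.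
  by rewrite (perm_all _ (Pf p)) all_w.
have sz : forall p, size (tr (w p)) <= n by move=> p; rewrite (perm_size (trP _)) size_w.
have gf : {in S (T1 L) tr, cancel f g}.
  move=> p; rewrite inE => /andP[_ Ha].
  by rewrite /g wf trK F_inv // trK ffun_of_w.
rewrite -(card_in_imset (can_in_inj gf)); apply: subset_leq_card.
apply/subsetP => q /imsetP[p Hp ->]; move: Hp; rewrite !inE => /andP[Hw Ha].
rewrite wf (parkW_perm (Pf p)) Hw /= trK.
exact: F_av.
Qed.

Lemma count_eq (L : nat -> nat -> bool)
  (H1 : forall v x z, L v z -> ~~ L v x -> L x z)
  (H2 : forall v x z, L v x -> ~~ L v z -> ~~ L x z)
  (tr : seq nat -> seq nat) (trK : involutive tr) (trP : forall s, perm_eq (tr s) s) :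
  #|S (T1 L) tr| = #|S (T2 L) tr|.
Proof.
apply/eqP; rewrite eqn_leq count_le //=.
have := @count_le (fun x y => ~~ L x y) _ _ tr trK trP.
have -> : S (T1 (fun x y => ~~ L x y)) tr = S (T2 L) tr.
  apply/setP => p; rewrite !inE; congr (_ && _); apply: av_ext => x y z.
  by rewrite /T1 /T2 ?negbK.
have -> : S (T2 (fun x y => ~~ L x y)) tr = S (T1 L) tr.
  apply/setP => p; rewrite !inE; congr (_ && _); apply: av_ext => x y z.
  by rewrite /T1 /T2 ?negbK.
apply.
- by move=> v x z A; rewrite negbK => B; exact: H2 B A.
- by move=> v x z A; rewrite !negbK => B; exact: H1 B A.
Qed.
End Count.

Lemma badI_ext T T' s : (forall x y z, T x y z = T' x y z) -> badI T s <-> badI T' s.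
Proof. by move=> E; split => -[a [b [c [? ? ? H]]]]; exists a, b, c; split; rewrite // ?E // -E. Qed.

Lemma pfE n sg T tr :
  (forall p : {ffun 'I_n -> 'I_n.+1}, in_range p ->
     (contains3 (Defs.pi_of p) sg <-> ~~ av T (tr (w p)))) ->
  pf n sg = #|S n T tr|.
Proof.
move=> H; rewrite /pf; apply: eq_card => p; rewrite !inE -parkingE /avoids3.
case Hp: (parking p) => //=.
have Hr : in_range p by move: Hp; rewrite /parking => /andP[].
have := H p Hr; case: (contains3 _ _); case: (av _ _) => //= -[A B].
- by have := A isT.
- by have := B isT.
Qed.

Definition Lle (x y : nat) : bool := y <= x.
Definition Llt (x y : nat) : bool := y < x.

Theorem proposition4p1 (n : nat) (hn : 0 < n) :
  pf n [:: 1; 3; 2] = pf n [:: 2; 3; 1] /\ pf n [:: 2; 1; 3] = pf n [:: 3; 1; 2].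
Proof.
split.
  rewrite (@pfE n _ (T2 Lle) rev); last first.
    move=> p Hr; apply: iff_trans (c132 Hr) _.
    apply: iff_trans _ (iff_sym (avP _ _)).
    apply: iff_trans _ (iff_sym (badI_rev _ _)).
    by apply: badI_ext => x y z; rewrite /T2 /Lle; apply/idP/idP; lia.
  rewrite (@pfE n _ (T1 Lle) rev); last first.
    move=> p Hr; apply: iff_trans (c231 Hr) _.
    apply: iff_trans _ (iff_sym (avP _ _)).
    apply: iff_trans _ (iff_sym (badI_rev _ _)).
    by apply: badI_ext => x y z; rewrite /T1 /Lle; apply/idP/idP; lia.
  symmetry; apply: count_eq.
  - by move=> v x z; rewrite /Lle; lia.
  - by move=> v x z; rewrite /Lle; lia.
  - exact: revK.
  - by move=> s; rewrite perm_rev.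
rewrite (@pfE n _ (T1 Llt) id); last first.
  move=> p Hr; apply: iff_trans (c213 Hr) _.
  apply: iff_trans _ (iff_sym (avP _ _)).
  by apply: badI_ext => x y z; rewrite /T1 /Llt; apply/idP/idP; lia.
rewrite (@pfE n _ (T2 Llt) id); last first.
  move=> p Hr; apply: iff_trans (c312 Hr) _.
  apply: iff_trans _ (iff_sym (avP _ _)).
  by apply: badI_ext => x y z; rewrite /T2 /Llt; apply/idP/idP; lia.
apply: count_eq.
- by move=> v x z; rewrite /Llt; lia.
- by move=> v x z; rewrite /Llt; lia.
- by [].
- by [].
Qed.
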